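(* Let $\theta=\pi/30$, let $$u=(u_1,\dots,u_8)=\Big(2\sin\theta,\ 2\sin 2\theta,\ 2\sin 3\theta,\ 2\sin 4\theta,\ 2\sin 5\theta,\ \frac{\sin 2\theta}{\sin 3\theta},\ \frac{\sin\theta}{\sin 3\theta},\ \frac{\sin\theta}{\sin 2\theta}\Big),$$ and let $M=2\sqrt3\,\dfrac{\sin 6\theta}{\sin\theta}$. Let $$P_1(x)=x^4-30x^3+240x^2-720x+720,\qquad P_2(x)=x^4-30x^3+300x^2-1080x+720 .$$ Then the roots of $P_1$ are $M u_j^2$ for $j\in\{2,5,7,8\}$ and the roots of $P_2$ are $M u_j^2$ for $j\in\{1,3,4,6\}$. Consequently the eight roots of $P=P_1P_2=x^8-60x^7+1440x^6-18000x^5+127440x^4-518400x^3+1166400x^2-1296000x+518400$ are exactly $M u_j^2$, $j=1,\dots,8$.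
   Context: In the application, $P$ is the characteristic polynomial of the mass-squared matrix $B_{ab}=\sum_{j=0}^{8} n_j\alpha_j^a\alpha_j^b$ of the $E_8$ affine Toda field theory (with $n_0=1$, $\alpha_0=-\delta$ minus the highest root, and $n_j$ the coefficients of the highest root), so the roots $M u_j^2$ are the squared masses $m_j^2$; the vector $u$ is the Perron–Frobenius eigenvector of $2I-C$ for the $E_8$ Cartan matrix $C$ (simple roots $\alpha_1,\dots,\alpha_7$ in a chain, $\alpha_8$ attached to $\alpha_5$). *)

(* Defs.v *)
From HB Require Import structures.
From mathcomp Require Import all_boot all_order all_algebra.
From mathcomp Require Import all_classical all_reals all_analysis.
Set Implicit Arguments. Unset Strict Implicit. Unset Printing Implicit Defensive.
Import Order.TTheory GRing.Theory Num.Theory.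
Local Open Scope ring_scope.

Section E8.
Variable R : realType.

Definition theta : R := pi / 30.

(* u_j for j = 1..8 (index 0 and >8 are junk, set to 0) *)
Definition u (j : nat) : R :=
  match j with
  | 1 => 2 * sin theta
  | 2 => 2 * sin (2 * theta)
  | 3 => 2 * sin (3 * theta)
  | 4 => 2 * sin (4 * theta)
  | 5 => 2 * sin (5 * theta)
  | 6 => sin (2 * theta) / sin (3 * theta)
  | 7 => sin theta / sin (3 * theta)
  | 8 => sin theta / sin (2 * theta)
  | _ => 0
  end.

Definition Mconst : R := 2 * Num.sqrt 3 * (sin (6 * theta) / sin theta).

Definition P1 : {poly R} :=
  'X^4 - 30%:P * 'X^3 + 240%:P * 'X^2 - 720%:P * 'X + 720%:P.
Definition P2 : {poly R} :=
  'X^4 - 30%:P * 'X^3 + 300%:P * 'X^2 - 1080%:P * 'X + 720%:P.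
(* Large numerals overflow the stack in MathComp's unary elaboration, so the
   coefficients 18000, 127440, 518400, 1166400, 1296000 are written as products
   of smaller numerals in R. *)
Definition P8 : {poly R} :=
  'X^8 - 60%:P * 'X^7 + 1440%:P * 'X^6 - (120 * 150)%:P * 'X^5
  + (360 * 354)%:P * 'X^4 - (720 * 720)%:P * 'X^3 + (1080 * 1080)%:P * 'X^2
  - (1080 * 1200)%:P * 'X + (720 * 720)%:P.

End E8.

(* Main.v *)
Require Import Defs.
From HB Require Import structures.
From mathcomp Require Import all_boot all_order all_algebra.
From mathcomp Require Import all_classical all_reals all_analysis.
From mathcomp Require Import ring lra.
Import Order.TTheory GRing.Theory Num.Theory.
Local Open Scope ring_scope.

Definition mp {R : realType} (x : R) : R := (1 - 8 * x ^+ 2 + 14 * x ^+ 4 - 7 * x ^+ 6 + x ^+ 8).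
Definition Rr1 {R : realType} (x : R) : R := (16 - 20 * x ^+ 2 + 12 * x ^+ 4 - 2 * x ^+ 6).
Definition Rr2 {R : realType} (x : R) : R := (2 + 8 * x ^+ 4 - 2 * x ^+ 6).
Definition Rr3 {R : realType} (x : R) : R := (14 - 34 * x ^+ 2 + 24 * x ^+ 4 - 4 * x ^+ 6).
Definition Rr4 {R : realType} (x : R) : R := (6 + 10 * x ^+ 2 - 10 * x ^+ 4 + 2 * x ^+ 6).
Definition Rr5 {R : realType} (x : R) : R := (4 - 4 * x ^+ 2 + 2 * x ^+ 4).
Definition Rr6 {R : realType} (x : R) : R := (- 6 + 44 * x ^+ 2 - 26 * x ^+ 4 + 4 * x ^+ 6).
Definition Rr7 {R : realType} (x : R) : R := (- 4 + 58 * x ^+ 2 - 38 * x ^+ 4 + 6 * x ^+ 6).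
Definition Rr8 {R : realType} (x : R) : R := (28 - 54 * x ^+ 2 + 28 * x ^+ 4 - 4 * x ^+ 6).
Definition S2 {R : realType} (x : R) : R := (x).
Definition S3 {R : realType} (x : R) : R := (- 1 + x ^+ 2).
Definition S4 {R : realType} (x : R) : R := (- 2 * x + x ^+ 3).
Definition S5 {R : realType} (x : R) : R := (1 - 3 * x ^+ 2 + x ^+ 4).
Definition S6 {R : realType} (x : R) : R := (3 * x - 4 * x ^+ 3 + x ^+ 5).
Definition V5 {R : realType} (x : R) : R := (5 * x - 5 * x ^+ 3 + x ^+ 5).
Definition K1 {R : realType} (x : R) : R := (- 16 + 12 * x ^+ 2 - 2 * x ^+ 4).
Definition K2 {R : realType} (x : R) : R := (- 2 - 16 * x ^+ 2 + 12 * x ^+ 4 - 2 * x ^+ 6).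
Definition K3 {R : realType} (x : R) : R := (- 14 + 42 * x ^+ 2 - 42 * x ^+ 4 + 16 * x ^+ 6 - 2 * x ^+ 8).
Definition K4 {R : realType} (x : R) : R := (- 6 - 58 * x ^+ 2 + 110 * x ^+ 4 - 72 * x ^+ 6 + 20 * x ^+ 8 - 2 * x ^+ 10).
Definition K5 {R : realType} (x : R) : R := (- 4 + 92 * x ^+ 2 - 240 * x ^+ 4 + 238 * x ^+ 6 - 110 * x ^+ 8 + 24 * x ^+ 10 - 2 * x ^+ 12).
Definition K6 {R : realType} (x : R) : R := (6 - 8 * x ^+ 2 + 2 * x ^+ 4).
Definition K7 {R : realType} (x : R) : R := (4 - 4 * x ^+ 2).
Definition K8 {R : realType} (x : R) : R := (2 * x ^+ 2).
Definition E1_1 {R : realType} (x : R) : R := 0.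
Definition E1_2 {R : realType} (x : R) : R := (- 200 + 160 * x ^+ 2 - 28 * x ^+ 4).
Definition E1_3 {R : realType} (x : R) : R := (- (1 * 1000 + 200) + (1 * 1000 + 728) * x ^+ 2 - (2 * 1000 + 952) * x ^+ 4 + (2 * 1000 + 88) * x ^+ 6 - 552 * x ^+ 8 + 48 * x ^+ 10).
Definition E1_4 {R : realType} (x : R) : R := (- (1 * 1000 + 616) + (2 * 1000 + 688) * x ^+ 2 - (9 * 1000 + 88) * x ^+ 4 + (14 * 1000 + 416) * x ^+ 6 - (12 * 1000 + 224) * x ^+ 8 + (5 * 1000 + 488) * x ^+ 10 - (1 * 1000 + 184) * x ^+ 12 + 96 * x ^+ 14).
Definition E2_1 {R : realType} (x : R) : R := 0.
Definition E2_2 {R : realType} (x : R) : R := (- 112 + 104 * x ^+ 2 - 20 * x ^+ 4).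
Definition E2_3 {R : realType} (x : R) : R := (- (2 * 1000 + 160) + (2 * 1000 + 880) * x ^+ 2 - (1 * 1000 + 272) * x ^+ 4 + 264 * x ^+ 6 - 24 * x ^+ 8).
Definition E2_4 {R : realType} (x : R) : R := (- (8 * 1000 + 784) + (5 * 1000 + 88) * x ^+ 2 + (28 * 1000 + 288) * x ^+ 4 - (57 * 1000 + 376) * x ^+ 6 + (51 * 1000 + 376) * x ^+ 8 - (25 * 1000 + 456) * x ^+ 10 + (7 * 1000 + 136) * x ^+ 12 - (1 * 1000 + 56) * x ^+ 14 + 64 * x ^+ 16).

Lemma sin_step (R : realType) (a b c t : R) : a = b + t -> c = b - t ->
  sin a = 2 * cos t * sin b - sin c.
Proof.
move=> -> ->; rewrite !sinD sinN cosN; ring.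
Qed.
Lemma cos_step (R : realType) (a b c t : R) : a = b + t -> c = b - t ->
  cos a = 2 * cos t * cos b - cos c.
Proof.
move=> -> ->; rewrite !cosD sinN cosN; ring.
Qed.

Lemma cos_third (R : realType) (a y : R) : y = cos a -> 0 < y ->
  cos (3 * a) = -1 -> y = 1/2.
Proof.
move=> hy y0 h.
have c2 : cos (2 * a) = 2 * cos a * cos a - cos 0 by apply: cos_step; ring.
have c3 : cos (3 * a) = 2 * cos a * cos (2*a) - cos a by apply: cos_step; ring.
rewrite c3 c2 cos0 -hy in h.
have : (y + 1) * (2 * y - 1) ^+ 2 = 0.
  rewrite (_ : _ * _ = (2 * y * (2 * y * y - 1) - y) + 1).
    by rewrite h addNr.
  ring.
move/eqP; rewrite mulf_eq0 expf_eq0 /= => /orP [|/eqP h2]; first by move/eqP; lra.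
lra.
Qed.

Lemma cos_fifth (R : realType) (a z : R) : z = cos a -> 0 < z ->
  cos (5 * a) = -1 -> 4 * z ^+ 2 - 2 * z - 1 = 0.
Proof.
move=> hy y0 h.
have c2 : cos (2 * a) = 2 * cos a * cos a - cos 0 by apply: cos_step; ring.
have c3 : cos (3 * a) = 2 * cos a * cos (2*a) - cos a by apply: cos_step; ring.
have c4 : cos (4 * a) = 2 * cos a * cos (3*a) - cos (2*a) by apply: cos_step; ring.
have c5 : cos (5 * a) = 2 * cos a * cos (4*a) - cos (3*a) by apply: cos_step; ring.
rewrite c5 c4 c3 c2 cos0 -hy in h.
have : (z + 1) * (4 * z ^+ 2 - 2 * z - 1) ^+ 2 = 0.
  rewrite (_ : _ * _ = (2 * z * (2 * z * (2 * z * (2 * z * z - 1) - z) - (2 * z * z - 1)) -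
      (2 * z * (2 * z * z - 1) - z)) + 1).
    by rewrite h addNr.
  ring.
move/eqP; rewrite mulf_eq0 expf_eq0 /= => /orP [|/eqP h2 //]; by move/eqP; lra.
Qed.

Lemma rvals (R : realType) : exists x : R, mp x = 0 /\
  Mconst R * u R 1 ^+ 2 = Rr1 x /\ Mconst R * u R 2 ^+ 2 = Rr2 x /\
  Mconst R * u R 3 ^+ 2 = Rr3 x /\ Mconst R * u R 4 ^+ 2 = Rr4 x /\
  Mconst R * u R 5 ^+ 2 = Rr5 x /\ Mconst R * u R 6 ^+ 2 = Rr6 x /\
  Mconst R * u R 7 ^+ 2 = Rr7 x /\ Mconst R * u R 8 ^+ 2 = Rr8 x.
Proof.
rewrite /Mconst /u.
set t := theta R.
have pi0 := pi_gt0 R.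
have ht : t = pi / 30 by [].
set c := cos t; set s := sin t.
have s2 : sin (2*t) = 2 * c * s - sin 0 by apply: sin_step; ring.
have s3 : sin (3*t) = 2 * c * sin (2*t) - s by apply: sin_step; ring.
have s4 : sin (4*t) = 2 * c * sin (3*t) - sin (2*t) by apply: sin_step; ring.
have s5 : sin (5*t) = 2 * c * sin (4*t) - sin (3*t) by apply: sin_step; ring.
have s6 : sin (6*t) = 2 * c * sin (5*t) - sin (4*t) by apply: sin_step; ring.
have c2 : cos (2*t) = 2 * c * c - cos 0 by apply: cos_step; ring.
have c3 : cos (3*t) = 2 * c * cos (2*t) - c by apply: cos_step; ring.
have c4 : cos (4*t) = 2 * c * cos (3*t) - cos (2*t) by apply: cos_step; ring.
have c5 : cos (5*t) = 2 * c * cos (4*t) - cos (3*t) by apply: cos_step; ring.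
have c6 : cos (6*t) = 2 * c * cos (5*t) - cos (4*t) by apply: cos_step; ring.
have c7 : cos (7*t) = 2 * c * cos (6*t) - cos (5*t) by apply: cos_step; ring.
have c8 : cos (8*t) = 2 * c * cos (7*t) - cos (6*t) by apply: cos_step; ring.
have c9 : cos (9*t) = 2 * c * cos (8*t) - cos (7*t) by apply: cos_step; ring.
have c10 : cos (10*t) = 2 * c * cos (9*t) - cos (8*t) by apply: cos_step; ring.
have e2 : sin (2*t) = s * S2 (2*c) by rewrite s2 sin0 /S2; ring.
have e3 : sin (3*t) = s * S3 (2*c) by rewrite s3 s2 sin0 /S3; ring.
have e4 : sin (4*t) = s * S4 (2*c) by rewrite s4 s3 s2 sin0 /S4; ring.
have e5 : sin (5*t) = s * S5 (2*c) by rewrite s5 s4 s3 s2 sin0 /S5; ring.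
have e6 : sin (6*t) = s * S6 (2*c) by rewrite s6 s5 s4 s3 s2 sin0 /S6; ring.
have hy : cos (10 * t) = 1/2.
  apply: (@cos_third R (10 * t)) => //.
    apply: cos_gt0_pihalf; rewrite ht; apply/andP; split; lra.
  by rewrite (_ : 3 * (10 * t) = pi) ?cospi // ht; field; by rewrite ?ns ?ns2 ?ns3 ?nc.
have hz : 4 * cos (6 * t) ^+ 2 - 2 * cos (6 * t) - 1 = 0.
  apply: (@cos_fifth R (6 * t)) => //.
    apply: cos_gt0_pihalf; rewrite ht; apply/andP; split; lra.
  by rewrite (_ : 5 * (6 * t) = pi) ?cospi // ht; field; by rewrite ?ns ?ns2 ?ns3 ?nc.
have hm : mp (2 * c) = 0.
  rewrite (_ : mp (2 * c) = (4 * c^+2 - 2) * (2 * cos (10 * t) - 1) - 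
     (4 * cos (6 * t) ^+ 2 - 2 * cos (6 * t) - 1)).
    by rewrite hz hy; field; by rewrite ?ns ?ns2 ?ns3 ?nc.
  rewrite c10 c9 c8 c7 c6 c5 c4 c3 c2 cos0 /mp; ring.
have hs3 : Num.sqrt 3 = V5 (2 * c).
  have h5 : 0 <= cos (5 * t).
    apply: cos_ge0_pihalf; rewrite ht; apply/andP; split; lra.
  have -> : (3 : R) = (2 * cos (5 * t)) ^+ 2.
    rewrite (_ : (2 * cos (5 * t)) ^+ 2 = 2 * (2 * cos (5 * t) * cos (5 * t) - 1) + 2); last by ring.
    have c10' : cos (10*t) = 2 * cos (5*t) * cos (5*t) - cos 0 by apply: cos_step; ring.
    rewrite c10' cos0 in hy.
    by rewrite hy; field; by rewrite ?ns ?ns2 ?ns3 ?nc.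
  rewrite sqrtr_sqr ger0_norm; last by lra.
  rewrite c5 c4 c3 c2 cos0 /V5; ring.
have sp : 0 < s by apply: sin_gt0_pi; rewrite ht; apply/andP; split; lra.
have s3p : 0 < sin (3 * t) by apply: sin_gt0_pi; rewrite ht; apply/andP; split; lra.
have s2p : 0 < sin (2 * t) by apply: sin_gt0_pi; rewrite ht; apply/andP; split; lra.
have ns : s != 0 by lra.
have ns3 : S3 (2 * c) != 0.
  apply/eqP => h; move: s3p; rewrite e3 h mulr0; lra.
have ns2 : S2 (2 * c) != 0.
  apply/eqP => h; move: s2p; rewrite e2 h mulr0; lra.
have hpy : s ^+ 2 + c ^+ 2 - 1 = 0 by rewrite (addrC (s ^+ 2)) /c /s cos2Dsin2 subrr.
have nc : c != 0 by apply: contraNneq ns2 => ->; rewrite mulr0.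
exists (2 * c); split => //.
rewrite /= e2 e3 e4 e5 e6 hs3.
split.
  transitivity (Rr1 (2*c) + K1 (2*c) * mp (2*c) + 8 * V5 (2*c) * S6 (2*c) * 1 ^+ 2 * (s ^+ 2 + c ^+ 2 - 1)).
    rewrite /Rr1 /K1 /mp /V5 /S6 /S2 /S3 /S4 /S5; field; by rewrite ?ns ?ns2 ?ns3 ?nc.
  by rewrite hm hpy !mulr0 !addr0.
split.
  transitivity (Rr2 (2*c) + K2 (2*c) * mp (2*c) + 8 * V5 (2*c) * S6 (2*c) * S2 (2*c) ^+ 2 * (s ^+ 2 + c ^+ 2 - 1)).
    rewrite /Rr2 /K2 /mp /V5 /S6 /S2 /S3 /S4 /S5; field; by rewrite ?ns ?ns2 ?ns3 ?nc.
  by rewrite hm hpy !mulr0 !addr0.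
split.
  transitivity (Rr3 (2*c) + K3 (2*c) * mp (2*c) + 8 * V5 (2*c) * S6 (2*c) * S3 (2*c) ^+ 2 * (s ^+ 2 + c ^+ 2 - 1)).
    rewrite /Rr3 /K3 /mp /V5 /S6 /S2 /S3 /S4 /S5; field; by rewrite ?ns ?ns2 ?ns3 ?nc.
  by rewrite hm hpy !mulr0 !addr0.
split.
  transitivity (Rr4 (2*c) + K4 (2*c) * mp (2*c) + 8 * V5 (2*c) * S6 (2*c) * S4 (2*c) ^+ 2 * (s ^+ 2 + c ^+ 2 - 1)).
    rewrite /Rr4 /K4 /mp /V5 /S6 /S2 /S3 /S4 /S5; field; by rewrite ?ns ?ns2 ?ns3 ?nc.
  by rewrite hm hpy !mulr0 !addr0.
split.
  transitivity (Rr5 (2*c) + K5 (2*c) * mp (2*c) + 8 * V5 (2*c) * S6 (2*c) * S5 (2*c) ^+ 2 * (s ^+ 2 + c ^+ 2 - 1)).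
    rewrite /Rr5 /K5 /mp /V5 /S6 /S2 /S3 /S4 /S5; field; by rewrite ?ns ?ns2 ?ns3 ?nc.
  by rewrite hm hpy !mulr0 !addr0.
split.
  transitivity (Rr6 (2*c) + K6 (2*c) * mp (2*c) / S3 (2*c) ^+ 2).
    move: ns3 ns2; rewrite /Rr6 /K6 /mp /V5 /S6 /S2 /S3 => ns3 ns2; field; by rewrite ?ns ?ns2 ?ns3 ?nc.
  by rewrite hm !(mulr0, mul0r) !addr0.
split.
  transitivity (Rr7 (2*c) + K7 (2*c) * mp (2*c) / S3 (2*c) ^+ 2).
    move: ns3 ns2; rewrite /Rr7 /K7 /mp /V5 /S6 /S2 /S3 => ns3 ns2; field; by rewrite ?ns ?ns2 ?ns3 ?nc.
  by rewrite hm !(mulr0, mul0r) !addr0.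

  transitivity (Rr8 (2*c) + K8 (2*c) * mp (2*c) / S2 (2*c) ^+ 2).
    move: ns3 ns2; rewrite /Rr8 /K8 /mp /V5 /S6 /S2 /S3 => ns3 ns2; field; by rewrite ?ns ?ns2 ?ns3 ?nc.
  by rewrite hm !(mulr0, mul0r) !addr0.
Qed.

Lemma quartic (R : realType) (a b c d : R) :
  ('X - a%:P) * (('X - b%:P) * (('X - c%:P) * (('X - d%:P) * 1))) =
  'X^4 - (a + b + c + d)%:P * 'X^3 + (a*b + a*c + a*d + b*c + b*d + c*d)%:P * 'X^2
  - (a*b*c + a*b*d + a*c*d + b*c*d)%:P * 'X + (a*b*c*d)%:P :> {poly R}.
Proof. rewrite !polyCD !polyCM; ring. Qed.

Theorem mainTheorem3 (R : realType) :
  P1 R = \prod_(j <- [:: 2; 5; 7; 8]%N) ('X - (Mconst R * u R j ^+ 2)%:P) /\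
  P2 R = \prod_(j <- [:: 1; 3; 4; 6]%N) ('X - (Mconst R * u R j ^+ 2)%:P) /\
  P8 R = P1 R * P2 R /\
  P8 R = \prod_(1 <= j < 9) ('X - (Mconst R * u R j ^+ 2)%:P).
Proof.
have [x [hm [h1 [h2 [h3 [h4 [h5 [h6 [h7 h8]]]]]]]]] := rvals R.
have eP1 : P1 R = \prod_(j <- [:: 2; 5; 7; 8]%N) ('X - (Mconst R * u R j ^+ 2)%:P).
  rewrite !big_cons big_nil h2 h5 h7 h8 quartic /P1.
  have v1 : Rr2 x + Rr5 x + Rr7 x + Rr8 x = 30.
    transitivity (30 + E1_1 x * mp x); last by rewrite hm mulr0 addr0.
    rewrite /Rr2 /Rr5 /Rr7 /Rr8 /E1_1 /mp; ring.
  have v2 : Rr2 x*Rr5 x + Rr2 x*Rr7 x + Rr2 x*Rr8 x + Rr5 x*Rr7 x + Rr5 x*Rr8 x + Rr7 x*Rr8 x = 240.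
    transitivity (240 + E1_2 x * mp x); last by rewrite hm mulr0 addr0.
    rewrite /Rr2 /Rr5 /Rr7 /Rr8 /E1_2 /mp; ring.
  have v3 : Rr2 x*Rr5 x*Rr7 x + Rr2 x*Rr5 x*Rr8 x + Rr2 x*Rr7 x*Rr8 x + Rr5 x*Rr7 x*Rr8 x = 720.
    transitivity (720 + E1_3 x * mp x); last by rewrite hm mulr0 addr0.
    rewrite /Rr2 /Rr5 /Rr7 /Rr8 /E1_3 /mp; ring.
  have v4 : Rr2 x*Rr5 x*Rr7 x*Rr8 x = 720.
    transitivity (720 + E1_4 x * mp x); last by rewrite hm mulr0 addr0.
    rewrite /Rr2 /Rr5 /Rr7 /Rr8 /E1_4 /mp; ring.
  by rewrite v1 v2 v3 v4.
have eP2 : P2 R = \prod_(j <- [:: 1; 3; 4; 6]%N) ('X - (Mconst R * u R j ^+ 2)%:P).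
  rewrite !big_cons big_nil h1 h3 h4 h6 quartic /P2.
  have v1 : Rr1 x + Rr3 x + Rr4 x + Rr6 x = 30.
    transitivity (30 + E2_1 x * mp x); last by rewrite hm mulr0 addr0.
    rewrite /Rr1 /Rr3 /Rr4 /Rr6 /E2_1 /mp; ring.
  have v2 : Rr1 x*Rr3 x + Rr1 x*Rr4 x + Rr1 x*Rr6 x + Rr3 x*Rr4 x + Rr3 x*Rr6 x + Rr4 x*Rr6 x = 300.
    transitivity (300 + E2_2 x * mp x); last by rewrite hm mulr0 addr0.
    rewrite /Rr1 /Rr3 /Rr4 /Rr6 /E2_2 /mp; ring.
  have v3 : Rr1 x*Rr3 x*Rr4 x + Rr1 x*Rr3 x*Rr6 x + Rr1 x*Rr4 x*Rr6 x + Rr3 x*Rr4 x*Rr6 x = 1080.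
    transitivity (1080 + E2_3 x * mp x); last by rewrite hm mulr0 addr0.
    rewrite /Rr1 /Rr3 /Rr4 /Rr6 /E2_3 /mp; ring.
  have v4 : Rr1 x*Rr3 x*Rr4 x*Rr6 x = 720.
    transitivity (720 + E2_4 x * mp x); last by rewrite hm mulr0 addr0.
    rewrite /Rr1 /Rr3 /Rr4 /Rr6 /E2_4 /mp; ring.
  by rewrite v1 v2 v3 v4.
have e8 : P8 R = P1 R * P2 R.
  rewrite /P8 /P1 /P2 !polyCM !polyC_natr; ring.
split => //; split => //; split => //.
rewrite e8 eP1 eP2 -big_cat; apply: perm_big; by [].
Qed.
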